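(* The persistency of entanglement of the $N$-singlet $|S^{(N)}_N\rangle\in(\mathbb{C}^N)^{\otimes N}$ is $N-1$. Equivalently, whatever the choice of single-qudit von Neumann measurements and whatever their outcomes, $N-1$ measurements on distinct qudits are needed to leave the state completely disentangled (fully product).
   Context: The $N$-singlet is the totally antisymmetric state $|S^{(N)}_N\rangle=\frac{1}{\sqrt{N!}}\sum_{\pi\in S_N}\operatorname{sgn}(\pi)|\alpha_{\pi(1)},\dots,\alpha_{\pi(N)}\rangle$ for an orthonormal basis $\{|\alpha_i\rangle\}$ of $\mathbb{C}^N$. The persistency of entanglement of a multipartite pure state is the minimal number of local (single-subsystem) von Neumann measurements that, for all measurement outcomes, leave the state completely disentangled. *)

(* Defs.v *)
From HB Require Import structures.
From mathcomp Require Import all_boot all_order all_fingroup all_algebra.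
Set Implicit Arguments. Unset Strict Implicit. Unset Printing Implicit Defensive.
Import Order.TTheory GRing.Theory Num.Theory.
Local Open Scope ring_scope.

Section Qudits.
Variable C : numClosedFieldType.
Variable N : nat.

(* A pure state of N qudits, each of local dimension N, i.e. a vector of
   (C^N)^{(x) N}: amplitudes indexed by multi-indices x : qudit -> level.
   (Unnormalised vectors are allowed.) *)
Definition state := {ffun {ffun 'I_N -> 'I_N} -> C}.

(* The N-singlet, written in the computational (orthonormal) basis
   |alpha_i> = e_i :
   |S_N^(N)> = 1/sqrt(N!) sum_{pi in S_N} sgn(pi) |alpha_{pi(1)},...,alpha_{pi(N)}>. *)
Definition singlet : state :=
  [ffun x : {ffun 'I_N -> 'I_N} => (sqrtC (N`!)%:R)^-1 *
             \sum_(s : 'S_N) (-1) ^+ odd_perm s * ([ffun i => s i] == x)%:R].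

(* An orthonormal basis of C^N : b j a = a-th coordinate of the j-th vector. *)
Definition orthonormal_basis (b : 'I_N -> 'I_N -> C) : Prop :=
  forall j k : 'I_N, \sum_(a < N) b j a * (b k a)^* = (j == k)%:R.

Definition upd (x : {ffun 'I_N -> 'I_N}) (q a : 'I_N) : {ffun 'I_N -> 'I_N} :=
  [ffun i => if i == q then a else x i].

(* Outcome j of the von Neumann measurement of qudit q in the orthonormal
   basis b: the (unnormalised) post-measurement state
   (|b_j><b_j| acting on qudit q) psi. *)
Definition measure1 (q : 'I_N) (b : 'I_N -> 'I_N -> C) (j : 'I_N)
    (psi : state) : state :=
  [ffun x : {ffun 'I_N -> 'I_N} => b j (x q) * \sum_(a < N) (b j a)^* * psi (upd x q a)].

(* Measuring successively the qudits listed in s, qudit q in basis B q,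
   with outcome o q; the result is the unnormalised post-measurement state
   (it is 0 exactly when this outcome sequence has probability 0). *)
Definition measure_seq (s : seq 'I_N) (B : 'I_N -> 'I_N -> 'I_N -> C)
    (o : 'I_N -> 'I_N) (psi : state) : state :=
  foldr (fun q phi => measure1 q (B q) (o q) phi) psi s.

Definition fully_product (psi : state) : Prop :=
  exists v : 'I_N -> 'I_N -> C, psi = [ffun x : {ffun 'I_N -> 'I_N} => \prod_(q < N) v q (x q)].

Definition disentangled_by (psi : state) (k : nat) : Prop :=
  exists s : seq 'I_N, [/\ uniq s, size s = k &
    exists B : 'I_N -> 'I_N -> 'I_N -> C,
      (forall q, orthonormal_basis (B q)) /\
      forall o : 'I_N -> 'I_N, fully_product (measure_seq s B o psi)].

Definition persistency_is (psi : state) (P : nat) : Prop :=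
  disentangled_by psi P /\ forall k, (k < P)%N -> ~ disentangled_by psi k.

End Qudits.

(* Main.v *)
Require Import Defs.
From HB Require Import structures.
From mathcomp Require Import all_boot all_order all_fingroup all_algebra.
From mathcomp Require Import zify.
Set Implicit Arguments. Unset Strict Implicit. Unset Printing Implicit Defensive.
Import Order.TTheory GRing.Theory Num.Theory.
Local Open Scope ring_scope.

Section Aux.
Variable C : numClosedFieldType.
Variable N : nat.
Local Notation state := (state C N).
Local Notation idx := {ffun 'I_N -> 'I_N}.

Definition swapx (p r : 'I_N) (x : idx) : idx := [ffun i => x (tperm p r i)].
Definition antisym (p r : 'I_N) (phi : state) := forall x, phi (swapx p r x) = - phi x.

Lemma antisym_measure1 p r q b j phi : q != p -> q != r ->
  antisym p r phi -> antisym p r (measure1 q b j phi).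
Proof.
move=> qp qr H x; rewrite /measure1 !ffunE.
rewrite tpermD // 1?eq_sym //.
rewrite -mulrN -sumrN; congr (_ * _); apply: eq_bigr => a _.
rewrite -mulrN -H; congr (_ * phi _); apply/ffunP => i; rewrite !ffunE.
have -> : (tperm p r i == q) = (i == q).
  apply/eqP/eqP => [E|->]; last by rewrite tpermD // eq_sym.
  by rewrite -(tpermK p r i) E tpermD // eq_sym.
done.
Qed.

Lemma antisym_seq p r s B o phi : p \notin s -> r \notin s ->
  antisym p r phi -> antisym p r (measure_seq s B o phi).
Proof.
elim: s => [|q s IH] //= ; rewrite !inE !negb_or => /andP[pq ps] /andP[rq rs] H.
apply: antisym_measure1; rewrite 1?eq_sym //; exact: IH.
Qed.

Lemma antisym_singlet p r : p != r -> antisym p r (singlet C N).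
Proof.
move=> pr x; rewrite /singlet !ffunE -mulrN -sumrN; congr (_ * _).
rewrite (reindex_inj (mulgI (tperm p r))) /=; apply: eq_bigr => s _.
rewrite odd_mul_tperm pr /=.
have -> : ([ffun i => (tperm p r * s)%g i] == swapx p r x) = ([ffun i => s i] == x).
  apply/eqP/eqP => E; apply/ffunP => i.
    have := congr1 (fun f : idx => f (tperm p r i)) E; rewrite !ffunE permM tpermK //.
  by rewrite !ffunE permM -E ffunE.
by case: (odd_perm s); rewrite /= ?expr0 ?expr1 ?mulN1r ?mul1r ?opprK.
Qed.

Lemma antisym_zero p r (phi : state) (x : idx) : antisym p r phi -> x p = x r -> phi x = 0.
Proof.
move=> H E; have Sx : swapx p r x = x.
  apply/ffunP => i; rewrite ffunE; case: tpermP => [->|->|] //; by rewrite E.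
have := H x; rewrite Sx => /eqP; rewrite -subr_eq0 opprK -mulr2n mulrn_eq0 /=.
by move/eqP.
Qed.

Lemma antisym_not_product p r (phi : state) : p != r -> antisym p r phi -> phi != 0 ->
  ~ fully_product phi.
Proof.
move=> pr H nz [v Ev].
have [x Hx] : exists x, phi x != 0.
  apply/existsP; apply: contraNT nz; rewrite negb_exists => /forallP F.
  by apply/eqP/ffunP => x; rewrite ffunE; apply/eqP; move: (F x); rewrite negbK.
have Phi y : phi y = v p (y p) * \prod_(q | q != p) v q (y q).
  by rewrite Ev ffunE (bigD1 p).
have Hx1 : \prod_(q | q != p) v q (x q) != 0.
  by apply: contra Hx; rewrite Phi => /eqP ->; rewrite mulr0.
pose y1 := [ffun i => if i == p then x r else x i].
have : phi y1 = 0 by apply: (antisym_zero H); rewrite !ffunE eqxx eq_sym (negbTE pr).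
rewrite Phi ffunE eqxx.
rewrite (eq_bigr (fun q => v q (x q))); last by move=> q /negbTE qp; rewrite ffunE qp.
move/eqP; rewrite mulf_eq0 (negbTE Hx1) orbF => /eqP V.
have : phi (swapx p r x) = 0 by rewrite Phi ffunE tpermL V mul0r.
by rewrite H => /eqP; rewrite oppr_eq0 (negbTE Hx).
Qed.


Lemma ortho_cols (b : 'I_N -> 'I_N -> C) : orthonormal_basis b ->
  forall c a : 'I_N, \sum_j b j c * (b j a)^* = (a == c)%:R.
Proof.
move=> H c a.
pose M := \matrix_(j < N, k < N) b j k.
pose M' := \matrix_(k < N, j < N) (b j k)^*.
have E : M *m M' = 1%:M.
  by apply/matrixP => j k; rewrite !mxE -H; apply: eq_bigr => i _; rewrite !mxE.
have := mulmx1C E => /matrixP /(_ a c); rewrite !mxE => <-.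
by apply: eq_bigr => j _; rewrite !mxE mulrC.
Qed.

Lemma measure1_sum q b (phi : state) : orthonormal_basis b ->
  \sum_j measure1 q b j phi = phi.
Proof.
move=> H; apply/ffunP => x; rewrite sum_ffunE.
under eq_bigr do rewrite ffunE big_distrr /=.
rewrite exchange_big /=.
rewrite (eq_bigr (fun a => (a == x q)%:R * phi (upd x q a))); last first.
  move=> a _; under eq_bigr do rewrite mulrA.
  by rewrite -big_distrl /= (ortho_cols H).
rewrite (bigD1 (x q)) //= big1 ?addr0.
  rewrite eqxx mul1r; congr (phi _).
  by apply/ffunP => i; rewrite ffunE; case: eqP => // ->.
by move=> a /negbTE na; rewrite na mul0r.
Qed.

Lemma measure1_nz q b (phi : state) : orthonormal_basis b -> phi != 0 ->
  exists j, measure1 q b j phi != 0.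
Proof.
move=> H nz; apply/existsP; apply: contraNT nz; rewrite negb_exists => /forallP F.
rewrite -(measure1_sum q phi H) big1 // => j _; move: (F j); by rewrite negbK => /eqP.
Qed.

Lemma measure_seq_eq s B o o' (phi : state) : {in s, o =1 o'} ->
  measure_seq s B o phi = measure_seq s B o' phi.
Proof.
elim: s => [|q s IH] //= E; rewrite E ?mem_head // IH // => i Hi.
by apply: E; rewrite inE Hi orbT.
Qed.

Lemma measure_seq_nz s B (phi : state) : uniq s -> (forall q, orthonormal_basis (B q)) ->
  phi != 0 -> exists o, measure_seq s B o phi != 0.
Proof.
move=> + HB nz; elim: s => [|q s IH] /=.
  by move=> _; exists id.
move=> /andP[qs us]; have [o Ho] := IH us.
have [j Hj] := @measure1_nz q (B q) _ (HB q) Ho.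
exists (fun i => if i == q then j else o i); rewrite eqxx.
rewrite (@measure_seq_eq s B _ o) //.
by move=> i Hi; case: eqP => // E; move: Hi; rewrite E (negbTE qs).
Qed.

Lemma singlet_nz : singlet C N != 0.
Proof.
apply/eqP => /ffunP /(_ [ffun i => i]); rewrite !ffunE.
rewrite (bigD1 1%g) //= big1 ?addr0.
  have -> : [ffun i => (1%g : 'S_N) i] == [ffun i => i].
    by apply/eqP/ffunP => i; rewrite !ffunE perm1.
  rewrite odd_perm1 expr0 !mul1r mulr1 => /eqP; rewrite invr_eq0 sqrtC_eq0 pnatr_eq0.
  by rewrite (negbTE (lt0n_neq0 (fact_gt0 N))).
move=> s s1; case: eqP; rewrite ?mulr0 // => E; case/eqP: s1.
by apply/permP => i; have := congr1 (fun f : idx => f i) E; rewrite !ffunE perm1.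
Qed.

Lemma singlet_supp x : singlet C N x != 0 -> exists s : 'S_N, x = [ffun i => s i].
Proof.
rewrite ffunE => H; have [s _ Hs] : exists2 s : 'S_N, true & [ffun i => s i] == x.
  apply/exists_inP; apply: contraNT H; rewrite negb_exists_in => /forall_inP F.
  by rewrite big1 ?mulr0 // => s _; rewrite (negbTE (F s _)) ?mulr0.
by exists s; rewrite (eqP Hs).
Qed.


Lemma not_product_part3 s B o : uniq s -> (size s < N.-1)%N ->
  measure_seq s B o (singlet C N) != 0 -> ~ fully_product (measure_seq s B o (singlet C N)).
Proof.
move=> us sz nz.
have : (1 < #|~: [set q in s]|)%N.
  have := cardsC [set q in s]; rewrite cardsE (card_uniqP us) card_ord => E.
  move: E sz; set n := #|_|; set m := size s; lia.
case/card_gt1P => p [r [Hp Hr pr]].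
move: Hp Hr; rewrite !in_setC !inE => Hp Hr.
apply: (antisym_not_product pr) => //.
by apply: antisym_seq => //; apply: antisym_singlet.
Qed.


Definition Bc : 'I_N -> 'I_N -> 'I_N -> C := fun q j a => (j == a)%:R.

Lemma Bc_ortho q : orthonormal_basis (Bc q).
Proof.
move=> j k; rewrite /Bc (bigD1 j) //= big1 ?addr0.
  by rewrite eqxx mul1r eq_sym rmorph_nat.
by move=> a; rewrite eq_sym => /negbTE ->; rewrite mul0r.
Qed.

Lemma measure_seq_Bc s o (phi : state) :
  measure_seq s Bc o phi = [ffun x : idx => (all (fun q => x q == o q) s)%:R * phi x].
Proof.
elim: s => [|q s IH] /=.
  by apply/ffunP => x; rewrite ffunE mul1r.
apply/ffunP => x; rewrite !ffunE /Bc (bigD1 (o q)) //= big1 ?addr0; last first.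
  by move=> a /negbTE; rewrite eq_sym => ->; rewrite conjC0 mul0r.
rewrite eqxx conjC1 mul1r IH ffunE eq_sym.
case Hq: (x q == o q); rewrite /= ?mul0r //; move/eqP: Hq => E.
rewrite -E; have -> : upd x q (x q) = x by apply/ffunP => i; rewrite ffunE; case: eqP => // ->.
by rewrite /= mul1r.
Qed.

Lemma point_product (phi : state) : (0 < N)%N ->
  (forall x y, phi x != 0 -> phi y != 0 -> x = y) -> fully_product phi.
Proof.
move=> hN U.
pose q0 : 'I_N := Ordinal hN.
pose x0 : idx := odflt [ffun i => i] [pick x | phi x != 0].
exists (fun q a => (if q == q0 then phi x0 else 1) * (a == x0 q)%:R).
apply/ffunP => x; rewrite ffunE.
have [->|nx] := eqVneq x x0.
  rewrite (bigD1 q0) //= big1 ?eqxx ?mulr1 // => q /negbTE ->.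
  by rewrite eqxx mulr1.
have -> : phi x = 0.
  apply/eqP; apply: contraNT nx => Hx; rewrite /x0.
  case: pickP => [y Hy|/(_ x)] /=; last by rewrite Hx.
  by rewrite (U x y).
have [q Hq] : exists q, x q != x0 q.
  apply/existsP; apply: contraNT nx; rewrite negb_exists => /forallP F.
  by apply/eqP/ffunP => q; move: (F q); rewrite negbK => /eqP.
by rewrite (bigD1 q) //= (negbTE Hq) !mulr0 mul0r.
Qed.

End Aux.

Theorem mainTheorem7 (C : numClosedFieldType) (N : nat) (hN : (0 < N)%N) :
  persistency_is (singlet C N) N.-1 /\
  (forall (s : seq 'I_N) (B : 'I_N -> 'I_N -> 'I_N -> C) (o : 'I_N -> 'I_N),
     uniq s -> (size s < N.-1)%N -> (forall q, orthonormal_basis (B q)) ->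
     measure_seq s B o (singlet C N) != 0 ->
     ~ fully_product (measure_seq s B o (singlet C N))).
Proof.
split; last by move=> s B o us sz _; apply: not_product_part3.
split; last first.
  move=> k hk [s [us sz [B [HB Hall]]]].
  have [o Ho] := @measure_seq_nz C N s B _ us HB (singlet_nz C N).
  by apply: (not_product_part3 us _ Ho) => //; rewrite sz.
have := size_enum_ord N; have := enum_uniq 'I_N; have Hm := mem_enum 'I_N.
case E: (enum 'I_N) => [|h t] /=; first by move=> _ E0; rewrite -E0 in hN.
move=> /andP[ht ut] Ht; exists t; split => //; first by move: Ht; set m := size t; lia.
exists (@Bc C N); split; first exact: Bc_ortho.
move=> o; rewrite measure_seq_Bc; apply: point_product => // x y.
have SS := @singlet_supp C N; set S := singlet C N in SS *; clearbody S; rewrite !ffunE; case Ax: (all _ t); rewrite ?mul0r ?eqxx //; rewrite mul1r => Hx.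
case Ay: (all _ t); rewrite ?mul0r ?eqxx //; rewrite mul1r => Hy.
have [s1 Ex] := SS _ Hx; have [s2 Ey] := SS _ Hy; subst x y.
have Eq q : q != h -> s1 q = s2 q.
  move=> qh; have : q \in t by move: (Hm q); rewrite E inE (negbTE qh).
  move: Ax Ay => /allP Ax /allP Ay qt.
  by move: (Ax q qt) (Ay q qt); rewrite !ffunE => /eqP -> /eqP ->.
have Eh : s1 h = s2 h.
  pose i := (s1^-1)%g (s2 h).
  have si : s1 i = s2 h by rewrite /i permKV.
  have [ih|ih] := eqVneq i h; first by rewrite -ih si ih.
  by have := Eq i ih; rewrite si => /perm_inj E'; rewrite E' eqxx in ih.
apply/ffunP => q; rewrite !ffunE; have [->|qh] := eqVneq q h; first exact: Eh.
exact: Eq.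
Qed.
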